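(* Let $S=(P,L)$ be a $(2,2)$-generalized quadrangle and let $(R,\psi)$ be a faithful representation of $S$ with $\psi(x)=\langle r_x\rangle$ and $|R|=2^4$. Let $a,b,c$ be three distinct points of $S$ with $r_ar_br_c=1$. Then $\{a,b,c\}$ is either a line or a complete $3$-arc of $S$.
   Context: A $(2,t)$-generalized quadrangle is a partial linear space in which every line has exactly $3$ points, every point lies on exactly $t+1$ lines, no point is collinear with all points, and for every point $x$ and line $\ell$ with $x\notin\ell$, $x$ is collinear with exactly one point of $\ell$. A $k$-arc is a set of $k$ pairwise non-collinear points; it is complete if it is not contained in a $(k+1)$-arc. A representation $(R,\psi)$ of $S$ is a group $R$ with a map $\psi$ assigning to each point $x$ a subgroup $\psi(x)=\langle r_x\rangle$ of order $2$, such that $R$ is generated by the $r_x$ and, for every line $\{x,y,z\}$, $\{1,r_x,r_y,r_z\}$ is a Klein four subgroup. It is faithful if $\psi$ is injective. *)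

(* Defs.v *)
From mathcomp Require Import all_boot all_order all_fingroup.
Set Implicit Arguments. Unset Strict Implicit. Unset Printing Implicit Defensive.

Section GQ.
Variable P : finType.
Variable L : {set {set P}}.

(* x and y are collinear: some line contains both (a point is collinear with itself
   as soon as it lies on a line). *)
Definition collinear (x y : P) : bool := [exists l in L, (x \in l) && (y \in l)].

Definition partial_linear_space : Prop :=
  (forall l, l \in L -> 2 <= #|l|) /\
  (forall x y l m, x != y -> l \in L -> m \in L ->
      x \in l -> y \in l -> x \in m -> y \in m -> l = m).

Definition is_GQ2 (t : nat) : Prop :=
  [/\ partial_linear_space,
      (forall l, l \in L -> #|l| = 3),
      (forall x, #|[set l in L | x \in l]| = t.+1),
      (forall x, exists y, ~~ collinear x y) &
      (forall x l, l \in L -> x \notin l -> #|[set y in l | collinear x y]| = 1)].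

Definition arc (A : {set P}) : bool :=
  [forall x in A, forall y in A, (x != y) ==> ~~ collinear x y].

Definition karc (k : nat) (A : {set P}) : bool := arc A && (#|A| == k).

Definition complete_karc (k : nat) (A : {set P}) : bool :=
  karc k A && ~~ [exists B : {set P}, karc k.+1 B && (A \subset B)].
End GQ.

Definition klein_four (gT : finGroupType) (A : {set gT}) : bool :=
  [&& group_set A, #|A| == 4 & [forall g in A, g ^+ 2 == 1]]%g.

(* (R, psi) with psi(x) = <r x> is a representation of (P, L) *)
Definition representation (P : finType) (L : {set {set P}}) (gT : finGroupType)
  (R : {group gT}) (r : P -> gT) : Prop :=
  [/\ (forall x, #|<[r x]>%g| = 2),
      <<[set r x | x : P]>>%g = R &
      (forall x y z, [set x; y; z] \in L -> x != y -> y != z -> x != z ->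
         klein_four [set 1%g; r x; r y; r z])].

Definition faithful_rep (P : finType) (gT : finGroupType) (r : P -> gT) : Prop :=
  injective (fun x => <[r x]>%g).

(* Main.v *)
Require Import Defs.
From mathcomp Require Import all_boot all_order all_fingroup.
Set Implicit Arguments. Unset Strict Implicit. Unset Printing Implicit Defensive.

Lemma card3 (T:finType) (x y z : T) : x!=y -> y!=z -> x!=z -> #|[set x;y;z]| = 3.
Proof. move=> xy yz xz.
rewrite -setUA cardsU1 cards2 !inE. by rewrite (negbTE xy) (negbTE xz) yz. Qed.

Lemma colC (P : finType) (L : {set {set P}}) x y : collinear L x y = collinear L y x.
Proof. by apply/existsP/existsP => -[l /andP[Hl /andP[H1 H2]]]; exists l; rewrite Hl H1 H2. Qed.

Lemma colI (P : finType) (L : {set {set P}}) x y l : l \in L -> x \in l -> y \in l -> collinear L x y.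
Proof. by move=> Hl H1 H2; apply/existsP; exists l; rewrite Hl H1 H2. Qed.

Definition Hyp (P : finType) (L : {set {set P}}) (gT : finGroupType) (r : P -> gT) : Prop :=
  [/\ (forall l, l \in L -> #|l| = 3),
      (forall x y l m, x != y -> l \in L -> m \in L ->
      x \in l -> y \in l -> x \in m -> y \in m -> l = m),
      (forall x, #|[set l in L | x \in l]| = 3),
      (forall x l, l \in L -> x \notin l -> #|[set y in l | collinear L x y]| = 1) &
      [/\ (forall x, (r x * r x = 1)%g), (forall x, r x != 1%g), (forall x y, r x = r y -> x = y) &
      (forall x y z, [set x; y; z] \in L -> x != y -> y != z -> x != z ->
         klein_four [set 1%g; r x; r y; r z])]].

Lemma line_eq P L gT r (H : @Hyp P L gT r) l x y z : l \in L -> x \in l -> y \in l -> z \in l ->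
  x != y -> y != z -> x != z -> l = [set x; y; z].
Proof.
case: H => H3 _ _ _ _ Hl Hx Hy Hz xy yz xz.
apply/eqP; rewrite eq_sym eqEcard card3 // H3 // leqnn andbT.
apply/subsetP => t; rewrite !inE => /orP[/orP[]|] /eqP->//.
Qed.

Lemma third P L gT r (H : @Hyp P L gT r) l x y : l \in L -> x \in l -> y \in l -> x != y ->
  exists w, [/\ w \in l, w != x, w != y, r w = (r x * r y)%g & r w = (r y * r x)%g].
Proof.
move=> Hl Hx Hy xy.
have Hsub : ~~ (l \subset [set x; y]).
  case: H => H3 _ _ _ _; apply/negP => /subset_leq_card.
  by rewrite H3 // cards2 xy.
case/subsetPn: Hsub => w Hw; rewrite !inE negb_or => /andP[wx wy].
exists w.
have Hl' : l = [set x; y; w] by apply: (line_eq H Hl Hx Hy Hw xy); rewrite eq_sym.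
case: H => _ _ _ _ [Hrr Hr1 Hinj Hkl].
have HlL : [set x; y; w] \in L by rewrite -Hl'.
have wx' : y != w by rewrite eq_sym.
have xw' : x != w by rewrite eq_sym.
have /and3P[/group_setP[_ Hg] _ _] := Hkl x y w HlL xy wx' xw'.
have yx : y != x by rewrite eq_sym.
have inA u : u \in [set x; y; w] -> r u \in [set 1%g; r x; r y; r w].
  by rewrite !inE => /orP[/orP[]|] /eqP->; rewrite eqxx ?orbT.
have inv u v : u != v -> (r u * r v)%g != 1%g.
  move=> uv; apply/eqP => e; move/eqP: uv; apply; apply: Hinj.
  by rewrite -(mulg1 (r u)) -e mulgA Hrr mul1g.
have nl u v : (r u * r v)%g != r u.
  apply/eqP => e; move/eqP: (Hr1 v); apply.
  have -> : r v = (r u * (r u * r v))%g by rewrite mulgA Hrr mul1g.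
  by rewrite e Hrr.
have nr u v : (r u * r v)%g != r v.
  apply/eqP => e; move/eqP: (Hr1 u); apply.
  have -> : r u = ((r u * r v) * r v)%g by rewrite -mulgA Hrr mulg1.
  by rewrite e Hrr.
have Xi : x \in [set x; y; w] by rewrite !inE eqxx.
have Yi : y \in [set x; y; w] by rewrite !inE eqxx orbT.
have H1 := Hg _ _ (inA x Xi) (inA y Yi).
have H2 := Hg _ _ (inA y Yi) (inA x Xi).
move: H1 H2; rewrite !inE (negbTE (inv _ _ xy)) (negbTE (inv _ _ yx)).
rewrite (negbTE (nl _ _)) (negbTE (nr _ _)) (negbTE (nl _ _)) (negbTE (nr _ _)) /=.
by move=> /eqP-> /eqP->.
Qed.

Lemma grp (gT : finGroupType) (u v w : gT) : (u * u = 1)%g -> (v * v = 1)%g -> (w * w = 1)%g ->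
  (u * v * w = 1)%g ->
  [/\ (u * v = w)%g, (v * u = w)%g, (v * w = u)%g, (w * v = u)%g & ((w * u = v)%g /\ (u * w = v)%g)].
Proof.
move=> hu hv hw e.
have e1 : (u * v = w)%g by rewrite -[LHS]mulg1 -hw mulgA e mul1g.
have e3 : (v * w = u)%g by rewrite -[LHS]mul1g -hu -mulgA (mulgA u v w) e mulg1.
have e5 : (w * u = v)%g by rewrite -[LHS]mul1g -hv -mulgA (mulgA v w u) e3 hu mulg1.
have i (x : gT) : (x * x = 1)%g -> (x^-1 = x)%g.
  by move=> hx; apply/eqP; rewrite eq_invg_mul hx.
split => //; last split => //.
- by rewrite -(i w hw) -e1 invMg (i u hu) (i v hv).
- by rewrite -(i u hu) -e3 invMg (i w hw) (i v hv).
- by rewrite -(i v hv) -e5 invMg (i w hw) (i u hu).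
Qed.

Lemma linemem P L gT r (H : @Hyp P L gT r) l a b c : l \in L -> a \in l -> c \in l -> a != c ->
  r b = (r a * r c)%g -> b \in l.
Proof.
move=> Hl Ha Hc ac e.
have [w [Hw _ _ e1 _]] := third H Hl Ha Hc ac.
case: H => _ _ _ _ [_ _ Hinj _].
by rewrite -(Hinj _ _ (etrans e1 (esym e))).
Qed.

Lemma getline (P : finType) (L : {set {set P}}) x y : collinear L x y ->
  exists l, [/\ l \in L, x \in l & y \in l].
Proof. by case/existsP => l /andP[Hl /andP[H1 H2]]; exists l. Qed.

Lemma Nlem P L gT r (H : @Hyp P L gT r) u v w z d :
  ~~ collinear L u v -> ~~ collinear L v w -> ~~ collinear L u w ->
  (r u * r v * r w = 1)%g ->
  ~~ collinear L d u -> ~~ collinear L d v -> ~~ collinear L d w ->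
  collinear L z u -> collinear L z v -> collinear L z d ->
  z != u -> z != v -> z != d -> False.
Proof.
move=> nuv nvw nuw e ndu ndv ndw czu czv czd zu zv zd.
have H' := H; case: H' => H3 Huniq Hdeg HGQ [Hrr Hr1 Hinj Hkl].
have [e1 e2 _ _ _] := grp (Hrr u) (Hrr v) (Hrr w) e.
have [mu [Hmu zmu umu]] := getline czu.
have [mv [Hmv zmv vmv]] := getline czv.
have [md [Hmd zmd dmd]] := getline czd.
have dl X Y mX : mX \in L -> X \in mX -> Y \in mX -> collinear L X Y.
  move=> *; exact: (colI (l := mX)).
have czw : collinear L z w.
  have [a' [a'mu a'z a'u ea1 ea2]] := third H Hmu zmu umu zu.
  have [b' [b'mv b'z b'v eb1 eb2]] := third H Hmv zmv vmv zv.
  have wmu : w \notin mu by apply/negP => wi; move/negP: nuw; apply; apply: (dl u w mu).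
  have wmv : w \notin mv by apply/negP => wi; move/negP: nvw; apply; apply: (dl v w mv).
  have pick m a x : m \in L -> w \notin m -> m = [set z; a; x] -> ~~ collinear L a w ->
      collinear L z w \/ collinear L w x.
    move=> Hm wm me naw.
    have /card_gt0P[q] : 0 < #|[set y in m | collinear L w y]| by rewrite HGQ.
    rewrite inE => /andP[qm cwq]; move: qm; rewrite me !inE => /orP[/orP[]|] /eqP qe; subst q.
    - by left; rewrite colC.
    - by move/negP: naw; rewrite colC.
    - by right.
  have mue : mu = [set z; u; a'] by apply: (line_eq H) => //; rewrite eq_sym.
  have mve : mv = [set z; v; b'] by apply: (line_eq H) => //; rewrite eq_sym.
  case: (pick _ _ _ Hmu wmu mue nuw) => // cwa.
  case: (pick _ _ _ Hmv wmv mve nvw) => // cwb.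
  have [m3 [Hm3 wm3 a'm3]] := getline cwa.
  have wa' : w != a' by apply/eqP => ewa; move: wmu; rewrite ewa a'mu.
  have wb' : w != b' by apply/eqP => ewb; move: wmv; rewrite ewb b'mv.
  have [e' [e'm3 _ _ ee _]] := third H Hm3 wm3 a'm3 wa'.
  have ee' : e' = b'.
    by apply: Hinj; rewrite ee eb2 ea2 -e2 -mulgA (mulgA (r u)) Hrr mul1g.
  subst e'.
  have ab : a' != b'.
    apply/eqP => eab; subst b'.
    have emm : mu = mv by apply: (Huniq z a') => //; rewrite eq_sym.
    by move/negP: nuv; apply; apply: (dl u v mu) => //; rewrite emm.
  have zm3 : z \notin m3.
    have m3e : m3 = [set w; a'; b'] by apply: (line_eq H).
    rewrite m3e !inE !negb_or -andbA; apply/and3P; split.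
    - by apply/eqP => ezw; move: wmu; rewrite -ezw zmu.
    - by rewrite eq_sym.
    - by rewrite eq_sym.
  have /cards1P[s es] : #|[set y in m3 | collinear L z y]| == 1 by rewrite HGQ.
  have : a' \in [set y in m3 | collinear L z y].
    by rewrite inE a'm3 /=; apply: (dl z a' mu).
  have : b' \in [set y in m3 | collinear L z y].
    by rewrite inE e'm3 /=; apply: (dl z b' mv).
  by rewrite es !inE => /eqP eb /eqP ea; move/negP: ab; rewrite ea eb eqxx.
have [mw [Hmw zmw wmw]] := getline czw.
have ne X Y (mX mY : {set P}) : mX \in L -> X \in mX -> Y \in mY -> ~~ collinear L X Y -> mX != mY.
  by move=> HX Xi Yi nc; apply/eqP => emm; move/negP: nc; apply; apply: (dl X Y mX) => //; rewrite emm.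
have Hu : uniq [:: mu; mv; mw; md].
  rewrite /= !inE !negb_or (ne u v mu mv) ?(ne u w mu mw) ?(ne u d mu md) ?(ne v w mv mw)
    ?(ne v d mv md) ?(ne w d mw md) // colC //.
have := uniq_leq_size Hu (s2 := enum [set l in L | z \in l]).
rewrite -cardE Hdeg /= => h.
suff : 4 <= 3 by [].
apply: h => l; rewrite mem_enum !inE => /or4P[] /eqP ->; apply/andP; split => //.
Qed.

Theorem corollary3p6 (P : finType) (L : {set {set P}}) (gT : finGroupType)
  (R : {group gT}) (r : P -> gT) (a b c : P) :
  is_GQ2 L 2 ->
  representation L R r ->
  faithful_rep r ->
  #|R| = 2 ^ 4 ->
  a != b -> b != c -> a != c ->
  (r a * r b * r c = 1)%g ->
  [set a; b; c] \in L \/ complete_karc L 3 [set a; b; c].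
Proof.
move=> [[_ Huniq] H3 Hdeg _ HGQ] [Hord _ Hkl] Hfaith _ ab bc ac e.
have Hrr x : (r x * r x = 1)%g.
  have h := expg_order (r x); have o2 : #[r x]%g = 2 := Hord x; rewrite o2 in h.
  by rewrite -h expgS expg1.
have Hr1 x : r x != 1%g.
  by apply/eqP => h; move: (Hord x); rewrite h cycle1 cards1.
have Hinj x y : r x = r y -> x = y.
  by move=> exy; apply: Hfaith => /=; rewrite exy.
have H : Hyp L r by split.
have [e1 e2 e3 e4 [e5 e6]] := grp (Hrr a) (Hrr b) (Hrr c) e.
have ba : b != a by rewrite eq_sym.
have cb : c != b by rewrite eq_sym.
have ca : c != a by rewrite eq_sym.
case: (boolP (collinear L a b)) => [cab|nab].
  have [l [Hl al bl]] := getline cab.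
  have cl : c \in l by apply: (linemem H Hl al bl ab); rewrite e1.
  by left; rewrite -(line_eq H Hl al bl cl ab bc ac).
case: (boolP (collinear L b c)) => [cbc|nbc].
  have [l [Hl bl cl]] := getline cbc.
  have al : a \in l by apply: (linemem H Hl bl cl bc); rewrite e3.
  by left; rewrite -(line_eq H Hl al bl cl ab bc ac).
case: (boolP (collinear L a c)) => [cac|nac].
  have [l [Hl al cl]] := getline cac.
  have bl : b \in l by apply: (linemem H Hl al cl ac); rewrite e6.
  by left; rewrite -(line_eq H Hl al bl cl ab bc ac).
right; rewrite /complete_karc /karc card3 // eqxx andbT.
apply/andP; split.
  apply/forallP => x; apply/implyP => xi; apply/forallP => y; apply/implyP => yi; apply/implyP => xy.
  move: xi yi xy; rewrite !inE => /orP[/orP[]|] /eqP-> /orP[/orP[]|] /eqP->;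
    rewrite ?eqxx // => _; rewrite // colC //.
apply/negP => /existsP[B /andP[/andP[arcB /eqP cB] sub]].
have : ~~ (B \subset [set a; b; c]).
  by apply/negP => /subset_leq_card; rewrite cB card3.
case/subsetPn => d dB; rewrite !inE !negb_or -andbA => /and3P[da db dc].
have nd x : x \in [set a; b; c] -> d != x -> ~~ collinear L d x.
  move=> xi dx; move/forallP: arcB => /(_ d); rewrite dB /= => /forallP /(_ x).
  by rewrite (subsetP sub x xi) /= dx.
have nda : ~~ collinear L d a by apply: nd; rewrite // !inE eqxx.
have ndb : ~~ collinear L d b by apply: nd; rewrite // !inE eqxx ?orbT.
have ndc : ~~ collinear L d c by apply: nd; rewrite // !inE eqxx ?orbT.
have /card_gt0P[l] : 0 < #|[set l in L | d \in l]| by rewrite Hdeg.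
rewrite inE => /andP[Hl dl].
have pt x : ~~ collinear L d x -> exists2 q, q \in l :\ d & (collinear L q x && (x \notin l)).
  move=> ndx.
  have xl : x \notin l by apply/negP => xl; move/negP: ndx; apply; apply: (colI Hl).
  have /card_gt0P[q] : 0 < #|[set y in l | collinear L x y]| by rewrite HGQ.
  rewrite inE => /andP[ql cq]; exists q; last by rewrite colC cq xl.
  rewrite !inE ql andbT; apply/eqP => qd; subst q.
  by move/negP: ndx; rewrite colC.
have [qa qaE /andP[cqa al]] := pt a nda.
have [qb qbE /andP[cqb bl]] := pt b ndb.
have [qc qcE /andP[cqc cl]] := pt c ndc.
have : (qa == qb) || (qb == qc) || (qa == qc).
  apply/negPn/negP; rewrite !negb_or -andbA => /and3P[h1 h2 h3].
  have : [set qa; qb; qc] \subset l :\ d.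
    by apply/subsetP => t; rewrite !inE => /orP[/orP[]|] /eqP->; rewrite -?(in_setD1) ?qaE ?qbE ?qcE.
  have h := cardsD1 d l; rewrite H3 // dl add1n in h.
  by move/subset_leq_card; rewrite card3 //; case: h => <-.
have zprops q x : q \in l :\ d -> x \notin l -> (q != x) && (q != d) && collinear L q d.
  rewrite !inE => /andP[qd ql] xl; rewrite qd /= andbT; apply/andP; split.
    by apply/eqP => qx; move: xl; rewrite -qx ql.
  exact: (colI Hl).
case/orP => [/orP[]|] /eqP eq.
- subst qb; have /andP[/andP[za zd] czd] := zprops _ _ qaE al.
  have /andP[/andP[zb _] _] := zprops _ _ qaE bl.
  exact: (Nlem H nab nbc nac e nda ndb ndc cqa cqb czd za zb zd).
- subst qc; have /andP[/andP[zb zd] czd] := zprops _ _ qbE bl.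
  have /andP[/andP[zc _] _] := zprops _ _ qbE cl.
  have e' : (r b * r c * r a = 1)%g by rewrite e3 Hrr.
  by apply: (Nlem H nbc _ _ e' ndb ndc nda cqb cqc czd zb zc zd); rewrite colC.
- subst qc; have /andP[/andP[za zd] czd] := zprops _ _ qaE al.
  have /andP[/andP[zc _] _] := zprops _ _ qaE cl.
  have e' : (r a * r c * r b = 1)%g by rewrite e6 Hrr.
  by apply: (Nlem H nac _ nab e' nda ndc ndb cqa cqc czd za zc zd); rewrite colC.
Qed.
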